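(* Let $(\mathbb X,S)$ be the subshift generated by a primitive substitution $\vartheta$ on a finite alphabet $\mathcal A$, let $(\mathbb X',S')$ be a $p$-periodic subshift over a finite alphabet, let $T=S\times S'$ on $\mathbb X\times\mathbb X'$, let $\rho$ be a $T$-ergodic Borel probability measure on $\mathbb X\times\mathbb X'$, and let $f:\mathbb X\times\mathbb X'\to\mathbb R$ be locally constant, i.e. $f(x,x')=g(x_n\cdots x_{n+k-1},x')$ for some $n\in\mathbb Z$, $k\in\mathbb N$, $g$. Assume there is a word $u\in\mathcal L(\mathbb X)$ with $\operatorname{ind}(u)>3$ such that $p$ divides $|\vartheta^n(u)|$ for infinitely many $n$. Then for $\rho$-almost every $\omega\in\mathbb X\times\mathbb X'$, the operator $H_\omega=\Delta+V_\omega$, $V_\omega(j)=f(T^j\omega)$, has no eigenvalues.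
   Context: $\Delta$ is the discrete Laplacian $(\Delta\psi)(n)=\psi(n+1)+\psi(n-1)$. The subshift of a substitution $\vartheta:\mathcal A\to\mathcal A^+$ is $\mathbb X_\vartheta=\{x\in\mathcal A^{\mathbb Z}:$ every finite subword of $x$ is a subword of some $\vartheta^m(a)$, $m\in\mathbb N$, $a\in\mathcal A\}$; $\vartheta$ is primitive if some power $\vartheta^N$ maps every letter to a word containing every letter. A $p$-periodic subshift is the set of translates of one $p$-periodic sequence. $\mathcal L(\mathbb X)$ is the set of finite words occurring in $\mathbb X$. For a word $u$ and $r=n+\ell/|u|$ with $n\in\mathbb Z_+$, $0\le\ell<|u|$, $u^r=u^nu_1\cdots u_\ell$; $\operatorname{ind}(u)=\sup\{r\in\frac1{|u|}\mathbb Z_+:u^r\in\mathcal L(\mathbb X)\}$. *)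

(* Defs.v *)
From HB Require Import structures.
From mathcomp Require Import all_boot all_order all_algebra.
From mathcomp Require Import all_classical all_reals all_analysis.
From mathcomp Require Import complex.

Set Implicit Arguments.
Unset Strict Implicit.
Unset Printing Implicit Defensive.

Import Order.TTheory GRing.Theory Num.Theory.
Local Open Scope classical_set_scope.
Local Open Scope ring_scope.

Section Words.
Variable A : finType.

Definition is_substitution (theta : A -> seq A) : Prop :=
  forall a, (0 < size (theta a))%N.

Definition subst_word (theta : A -> seq A) (w : seq A) : seq A :=
  flatten (map theta w).

Definition subst_iter (theta : A -> seq A) (m : nat) (w : seq A) : seq A :=
  iter m (subst_word theta) w.

Definition primitive (theta : A -> seq A) : Prop :=
  exists N : nat, forall a b : A, b \in subst_iter theta N [:: a].

Definition wfactor (x : int -> A) (i : int) (len : nat) : seq A :=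
  [seq x (i + (j%:Z)) | j <- iota 0 len].

Definition subshift_of (theta : A -> seq A) : set (int -> A) :=
  [set x | forall (i : int) (len : nat),
     exists (m : nat) (a : A), infix (wfactor x i len) (subst_iter theta m [:: a])].

Definition language (X : set (int -> A)) : set (seq A) :=
  [set w | exists2 x, X x & exists i : int, w = wfactor x i (size w)].

(* u^r with r = m / |u|: the prefix of length m of u u u ... *)
Definition wpow (u : seq A) (m : nat) : seq A := take m (flatten (nseq m u)).

Definition index_word (R : realType) (X : set (int -> A)) (u : seq A) : \bar R :=
  ereal_sup [set ((m%:R / (size u)%:R : R)%:E) | m in [set m : nat | language X (wpow u m)]].

End Words.

(* shift of a bi-infinite sequence: (shiftZ j x)_n = x_{n+j}, so shiftZ 1 = S *)
Definition shiftZ (B : Type) (j : int) (x : int -> B) : int -> B :=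
  fun n => x (n + j).

(* a p-periodic subshift: the set of translates of one p-periodic sequence *)
Definition periodic_subshift (B : Type) (p : nat) (y : int -> B) : set (int -> B) :=
  [set shiftZ j y | j in [set: int]].

Definition is_periodic (B : Type) (p : nat) (y : int -> B) : Prop :=
  (0 < p)%N /\ forall n : int, y (n + p%:Z) = y n.

(* Ambient space A^Z x A'^Z; the points a0, b0 only serve to make the type
   pointed, as required by MathComp-Analysis' measurable types. *)
Definition Omega (A A' : finType) (a0 : A) (b0 : A') : Type :=
  ((int -> A) * (int -> A'))%type.

Section OmegaInstances.
Variables (A A' : finType) (a0 : A) (b0 : A').
HB.instance Definition _ := gen_eqMixin (Omega a0 b0).
HB.instance Definition _ := gen_choiceMixin (Omega a0 b0).
HB.instance Definition _ :=
  isPointed.Build (Omega a0 b0) ((fun _ => a0), (fun _ => b0)).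

(* cylinder (coordinate) sets; they generate the Borel sigma-algebra of the
   product topology of the discrete finite alphabets *)
Definition cylinders : set (set (Omega a0 b0)) :=
  [set E | exists (n : int) (a : A), E = [set w | w.1 n = a]] `|`
  [set E | exists (n : int) (b : A'), E = [set w | w.2 n = b]].
End OmegaInstances.

Definition OmegaM (A A' : finType) (a0 : A) (b0 : A') :=
  g_sigma_algebraType (@cylinders A A' a0 b0).

Definition Tshift (A A' : finType) (a0 : A) (b0 : A') (j : int)
  (w : OmegaM a0 b0) : OmegaM a0 b0 := (shiftZ j w.1, shiftZ j w.2).

Section Schrodinger.
Variable R : realType.
Local Open Scope complex_scope.

Definition sqnorm (z : R[i]) : R := (complex.Re `|z|) ^+ 2.

Definition l2Z (psi : int -> R[i]) : Prop :=
  (\sum_(0 <= n <oo) ((sqnorm (psi n%:Z) + sqnorm (psi (- (n.+1)%:Z)))%:E) < +oo)%E.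

Definition is_eigenvalue (V : int -> R) (E : R[i]) : Prop :=
  exists psi : int -> R[i],
    [/\ l2Z psi, exists n, psi n != 0 &
        forall n : int, psi (n + 1) + psi (n - 1) + (V n)%:C * psi n = E * psi n].

Definition has_no_eigenvalues (V : int -> R) : Prop :=
  forall E : R[i], ~ is_eigenvalue V E.
End Schrodinger.

(* Main.v *)
Require Import Defs.
From HB Require Import structures.
From mathcomp Require Import all_boot all_order all_algebra.
From mathcomp Require Import all_classical all_reals all_analysis.
From mathcomp Require Import complex.
From mathcomp Require Import zify ring lra.
Import Order.TTheory GRing.Theory Num.Theory.
Local Open Scope classical_set_scope.
Local Open Scope ring_scope.
Set Implicit Arguments.
Unset Strict Implicit.
Unset Printing Implicit Defensive.
From mathcomp Require Import zify ring lra.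
Section Gordon.
Variable R : realType.
Local Open Scope complex_scope.
Local Notation C := R[i].

Definition nz (z : C) : R := complex.Re `|z|.

Lemma normC_nz (z : C) : `|z| = (nz z)%:C.
Proof. by rewrite /nz normc_def. Qed.

Lemma nz_ge0 z : 0 <= nz z.
Proof. by have := normr_ge0 z; rewrite normC_nz lecR. Qed.

Lemma nz_eq0 z : nz z = 0 -> z = 0.
Proof. by move=> h; apply/eqP; rewrite -normr_eq0 normC_nz h. Qed.

Lemma nzD z w : nz (z + w) <= nz z + nz w.
Proof. by have := ler_normD z w; rewrite !normC_nz -rmorphD lecR. Qed.

Lemma nzM z w : nz (z * w) = nz z * nz w.
Proof. by apply: complexI; rewrite rmorphM -!normC_nz normrM. Qed.

Lemma nzN z : nz (- z) = nz z.
Proof. by apply: complexI; rewrite -!normC_nz normrN. Qed.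

Lemma nzB z w : nz (z - w) <= nz z + nz w.
Proof. by rewrite -(nzN w) nzD. Qed.

End Gordon.
From mathcomp Require Import zify ring lra.
Section Decay.
Variable R : realType.
Lemma bounded_sum_decay (a : nat -> R) (B : R) :
  (forall k, 0 <= a k) -> (forall K, \sum_(0 <= i < K) a i <= B) ->
  forall e, 0 < e -> exists N, forall k, (N <= k)%N -> a k < e.
Proof.
move=> a0 hB e e0; apply/not_existsP => hN.
have hinf : forall N, exists k, (N <= k)%N /\ e <= a k.
  move=> N; have /existsNP [k /not_implyP [hk hk']] := hN N.
  by exists k; split => //; rewrite leNgt; apply/negP.
have hM : forall M : nat, exists K, M%:R * e <= \sum_(0 <= i < K) a i.
  elim=> [|M [K hK]]; first by exists 0%N; rewrite mul0r big_geq.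
  have [k [hk hek]] := hinf K; exists k.+1.
  rewrite big_nat_recr //= (big_cat_nat (leq0n K) hk) /=.
  have : 0 <= \sum_(K <= i < k) a i by apply: sumr_ge0.
  rewrite -nat1r mulrDl mul1r; lra.
have [K hK] := hM (Num.Def.archi_bound (B / e)).
have B0 : 0 <= B by apply: le_trans (hB 0%N); rewrite big_geq.
have := archi_boundP (divr_ge0 B0 (ltW e0)).
rewrite ltr_pdivrMr // => h.
have := hB K; lra.
Qed.
End Decay.
Section G2.
Variable R : realType.
Local Open Scope complex_scope.
Local Notation C := R[i].

Lemma l2_decay (psi : int -> C) : l2Z psi ->
  forall eps : R, 0 < eps -> exists N : nat, forall n : int,
    (N%:Z <= `|n|)%R -> nz (psi n) < eps.
Proof.
move=> hl eps e0.
pose a k := sqnorm (psi k%:Z) + sqnorm (psi (- (k.+1)%:Z)).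
have a0 : forall k, 0 <= a k by move=> k; rewrite /a /sqnorm addr_ge0 // sqr_ge0.
move: hl; rewrite /l2Z => hl.
have hS : forall K, ((\sum_(0 <= i < K) a i)%:E <= \sum_(0 <= n <oo) (a n)%:E)%E.
  move=> K; rewrite -sumEFin; apply: nneseries_lim_ge => n _ _; rewrite lee_fin.
  exact: a0.
set S := (\sum_(0 <= n <oo) (a n)%:E)%E in hl hS.
have S0 : (0 <= S)%E by apply: nneseries_ge0 => n _ _; rewrite lee_fin.
have Sf : S \is a fin_num by rewrite ge0_fin_numE.
have hB : forall K, \sum_(0 <= i < K) a i <= fine S.
  by move=> K; rewrite -lee_fin fineK // hS.
have [N hN] := bounded_sum_decay a0 hB (mulr_gt0 e0 e0).
have key : forall z, sqnorm z < eps * eps -> nz z < eps.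
  move=> z; rewrite /sqnorm -/(nz z) => h; rewrite ltNge; apply/negP => h'.
  have : eps * eps <= nz z * nz z by apply: ler_pM => //; exact: ltW.
  by rewrite -expr2; lra.
exists N.+1 => n; case: n => k /=.
- move=> hk; apply: key.
  have := hN k; rewrite /a => /(_ _); have hk' : (N <= k)%N by lia.
  move=> /(_ hk'); have := sqr_ge0 (nz (psi (- (k.+1)%:Z)));
  rewrite /sqnorm -/(nz _) => ?; lra.
- move=> hk; apply: key.
  have hk' : (N <= k)%N by lia.
  have := hN k hk'; rewrite /a NegzE.
  have := sqr_ge0 (nz (psi k%:Z)); rewrite /sqnorm -/(nz _) => ?; lra.
Qed.
End G2.
Section G3.
Variable R : realType.
Local Open Scope complex_scope.
Local Notation C := R[i].

Definition m4 := (C * C * C * C)%type.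
Definition mmul (X Y : m4) : m4 :=
  let: (a, b, c, d) := X in let: (a', b', c', d') := Y in
  (a * a' + b * c', a * b' + b * d', c * a' + d * c', c * b' + d * d').
Definition mapp (X : m4) (w : C * C) : C * C :=
  let: (a, b, c, d) := X in (a * w.1 + b * w.2, c * w.1 + d * w.2).
Definition mdet (X : m4) : C := let: (a, b, c, d) := X in a * d - b * c.
Definition mtr (X : m4) : C := let: (a, b, c, d) := X in a + d.

Lemma mappM X Y w : mapp (mmul X Y) w = mapp X (mapp Y w).
Proof.
case: X => [[[a b] c] d]; case: Y => [[[a' b'] c'] d']; case: w => u v /=.
congr pair; ring.
Qed.

Lemma mdetM X Y : mdet (mmul X Y) = mdet X * mdet Y.
Proof.
case: X => [[[a b] c] d]; case: Y => [[[a' b'] c'] d'] /=; ring.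
Qed.

Lemma mCH X w : mdet X = 1 ->
  mapp X (mapp X w) = (mtr X * (mapp X w).1 - w.1, mtr X * (mapp X w).2 - w.2).
Proof.
move=> h.
have gen : mapp X (mapp X w) =
  (mtr X * (mapp X w).1 - mdet X * w.1, mtr X * (mapp X w).2 - mdet X * w.2).
  by case: X {h} => [[[a b] c] d]; case: w => u v /=; congr pair; ring.
by rewrite gen h !mul1r.
Qed.

Variables (V : int -> R) (E : C).
Definition Amat (n : int) : m4 := (E - (V n)%:C, -1, 1, 0).
Fixpoint Pm (s : int) (m : nat) : m4 :=
  if m is m'.+1 then mmul (Amat (s + m'%:Z)) (Pm s m') else (1, 0, 0, 1).

Lemma mdetPm s m : mdet (Pm s m) = 1.
Proof.
elim: m => [|m IH]; first by rewrite /= mulr1 mulr0 subr0.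
have -> : Pm s m.+1 = mmul (Amat (s + m%:Z)) (Pm s m) by [].
rewrite mdetM IH mulr1 /=; ring.
Qed.

Lemma Pm_per s t m : (forall j : nat, (j < m)%N -> V (t + j%:Z) = V (s + j%:Z)) ->
  Pm t m = Pm s m.
Proof.
elim: m => [|m IH] h //=.
by rewrite IH ?(h m) // => j hj; apply: h; apply: ltn_trans hj _.
Qed.

Variable psi : int -> C.
Hypothesis eig : forall n : int, psi (n + 1) + psi (n - 1) + (V n)%:C * psi n = E * psi n.
Definition Phi (n : int) : C * C := (psi n, psi (n - 1)).

Lemma PhiS n : Phi (n + 1) = mapp (Amat n) (Phi n).
Proof.
rewrite /Phi /= addrK; congr pair; last by rewrite mul1r mul0r addr0.
have := eig n; move=> h.
have -> : psi (n + 1) = E * psi n - psi (n - 1) - (V n)%:C * psi n.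
  by rewrite -h; ring.
ring.
Qed.

Lemma Phi_Pm s m : Phi (s + m%:Z) = mapp (Pm s m) (Phi s).
Proof.
elim: m => [|m IH]; first by rewrite addr0 /Phi /=; congr pair; ring.
have -> : Pm s m.+1 = mmul (Amat (s + m%:Z)) (Pm s m) by [].
by rewrite mappM -IH -PhiS; congr Phi; rewrite -addrA -PoszD addn1.
Qed.
End G3.
Section G4.
Variable R : realType.
Local Open Scope complex_scope.
Local Notation C := R[i].

Lemma three (t x y z w : C) : z = t * y - x -> y = t * x - w ->
  nz x <= nz y + nz z + nz w.
Proof.
move=> hz hy.
have y0 := nz_ge0 y; have z0 := nz_ge0 z; have w0 := nz_ge0 w; have x0 := nz_ge0 x.
have t0 := nz_ge0 t.
case: (lerP (nz t) 1) => ht.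
- have hx : x = t * y - z by rewrite hz; ring.
  have := nzB (t * y) z; rewrite -hx nzM => h.
  have : nz t * nz y <= nz y by rewrite ler_piMl.
  lra.
- have hx : t * x = y + w by rewrite hy; ring.
  have := nzD y w; rewrite -hx nzM => h.
  have : nz x <= nz t * nz x by rewrite ler_peMl // ltW.
  lra.
Qed.

Lemma gordon (V : int -> R) (c : int) :
  (forall N : nat, exists q : nat, (N <= q)%N /\
     forall j : int, (- q%:Z <= j < q%:Z)%R -> V (c + j) = V (c + j + q%:Z)) ->
  has_no_eigenvalues V.
Proof.
move=> hG E [psi [hl [n0 hn0] eig]].
have key : forall eps, 0 < eps ->
    nz (psi c) <= 3%:R * eps /\ nz (psi (c - 1)) <= 3%:R * eps.
  move=> eps e0.
  have [N hN] := l2_decay hl e0.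
  have [q [hq hper]] := hG (N + `|c|%N + 2)%N.
  pose M := Pm V E c q.
  have e1 : Phi psi (c + q%:Z) = mapp M (Phi psi c) by rewrite (Phi_Pm eig).
  have e2 : Phi psi (c + q%:Z + q%:Z) = mapp M (Phi psi (c + q%:Z)).
    rewrite (Phi_Pm eig) // /M; congr mapp; apply: Pm_per => j hj.
    rewrite (hper j%:Z); [congr V; ring | lia].
  have e3 : Phi psi c = mapp M (Phi psi (c - q%:Z)).
    have -> : Phi psi c = Phi psi (c - q%:Z + q%:Z) by rewrite subrK.
    rewrite (Phi_Pm eig) // /M; congr mapp; apply: Pm_per => j hj.
    have h := hper (j%:Z - q%:Z) ltac:(lia).
    have -> : c - q%:Z + j%:Z = c + (j%:Z - q%:Z) by ring.
    rewrite h; congr V; ring.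
  have dM : mdet M = 1 by rewrite mdetPm.
  have ch1 := mCH (Phi psi c) dM.
  have ch2 := mCH (Phi psi (c - q%:Z)) dM.
  rewrite -e1 -e2 in ch1; rewrite -e3 -e1 in ch2.
  move: ch1 ch2; rewrite /Phi => -[h1 h1'] [h2 h2'].
  have b := fun n (hn : (N%:Z <= `|n|)%R) => ltW (hN n hn).
  split.
  - have := three h1 h2.
    have := b (c + q%:Z) ltac:(lia); have := b (c + q%:Z + q%:Z) ltac:(lia);
    have := b (c - q%:Z) ltac:(lia); lra.
  - have := three h1' h2'.
    have := b (c + q%:Z - 1) ltac:(lia); have := b (c + q%:Z + q%:Z - 1) ltac:(lia);
    have := b (c - q%:Z - 1) ltac:(lia); lra.
have z0 : forall n, (forall eps, 0 < eps -> nz (psi n) <= 3%:R * eps) -> psi n = 0.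
  move=> n h; apply: nz_eq0; apply/eqP; rewrite eq_le nz_ge0 andbT.
  rewrite leNgt; apply/negP => hp.
  have := h (nz (psi n) / 4%:R); rewrite divr_gt0 // => /(_ isT); lra.
have pc : psi c = 0 by apply: z0 => eps e0; case: (key eps e0).
have pc1 : psi (c - 1) = 0 by apply: z0 => eps e0; case: (key eps e0).
have fw : forall m : nat, psi (c + m%:Z) = 0 /\ psi (c + m%:Z - 1) = 0.
  elim=> [|m [IH1 IH2]]; first by rewrite addr0.
  have e := eig (c + m%:Z); rewrite IH1 IH2 !mulr0 !addr0 in e.
  split; last by rewrite -[m.+1]addn1 PoszD addrA addrK.
  by rewrite -[m.+1]addn1 PoszD addrA e.
have bw : forall m : nat, psi (c - m%:Z) = 0 /\ psi (c - m%:Z - 1) = 0.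
  elim=> [|m [IH1 IH2]]; first by rewrite subr0.
  have e := eig (c - m%:Z - 1); rewrite subrK IH1 IH2 !mulr0 add0r !addr0 in e.
  split; first by rewrite -[m.+1]addn1 PoszD opprD addrA.
  by rewrite -[m.+1]addn1 PoszD opprD addrA e.
move/eqP: hn0; apply.
case hd: (n0 - c) => [m|m].
- by have := (fw m).1; rewrite -hd addrC subrK.
- have -> : n0 = c - m.+1%:Z by move: hd; rewrite NegzE; lia.
  exact: (bw m.+1).1.
Qed.
End G4.
Section Meas.
Variables (A A' : finType) (a0 : A) (b0 : A').
Local Notation T := (OmegaM a0 b0).

Lemma mcyl1 n a : measurable [set w : T | w.1 n = a].
Proof. apply: sub_sigma_algebra; left; by exists n, a. Qed.

Lemma mcyl2 n b : measurable [set w : T | w.2 n = b].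
Proof. apply: sub_sigma_algebra; right; by exists n, b. Qed.

Lemma mU (I : countType) (F : I -> set T) :
  (forall i, measurable (F i)) -> measurable (\bigcup_i F i).
Proof. by move=> h; apply: countable_bigcupT_measurable => //; exact: countableP. Qed.

Lemma mI (I : countType) (F : I -> set T) :
  (forall i, measurable (F i)) -> measurable (\bigcap_i F i).
Proof.
move=> h; rewrite -[X in measurable X]setCK setC_bigcap; apply: measurableC.
by apply: mU => i; apply: measurableC.
Qed.

Lemma meq1 a b : measurable [set w : T | w.1 a = w.1 b].
Proof.
have -> : [set w : T | w.1 a = w.1 b] =
    \bigcup_(c : A) ([set w : T | w.1 a = c] `&` [set w : T | w.1 b = c]).
  apply/seteqP; split => w /=.
  - by move=> h; exists (w.1 a) => //; split.
  - by move=> [c _ [-> ->]].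
by apply: mU => c; apply: measurableI; [apply: mcyl1 | apply: mcyl1].
Qed.

Lemma mforall (K : nat) (S : nat -> set T) : (forall i, measurable (S i)) ->
  measurable [set w : T | forall i, (i < K)%N -> S i w].
Proof.
move=> h.
have -> : [set w : T | forall i, (i < K)%N -> S i w] =
    \bigcap_(i : nat) (if (i < K)%N then S i else setT).
  apply/seteqP; split => w /=.
  - by move=> hw i _; case: ifP => // /hw.
  - by move=> hw i hi; have := hw i I; rewrite hi.
by apply: mI => i; case: ifP => _ //; exact: measurableT.
Qed.

Lemma mmap1 (l : seq int) (Q : seq A -> Prop) :
  measurable [set w : T | Q (map w.1 l)].
Proof.
elim: l Q => [|i l IH] Q /=.
  case: (pselect (Q [::])) => hQ.
  - have -> : [set w : T | Q [::]] = setT by apply/seteqP; split.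
    exact: measurableT.
  - have -> : [set w : T | Q [::]] = set0 by apply/seteqP; split.
    exact: measurable0.
have -> : [set w : T | Q (w.1 i :: map w.1 l)] =
    \bigcup_(c : A) ([set w : T | w.1 i = c] `&` [set w : T | Q (c :: map w.1 l)]).
  apply/seteqP; split => w /=.
  - by move=> h; exists (w.1 i) => //; split.
  - by move=> [c _ [-> h]].
by apply: mU => c; apply: measurableI; [apply: mcyl1 | apply: (IH (fun s => Q (c :: s)))].
Qed.

Lemma TshiftD i j (w : T) : Tshift j (Tshift i w) = Tshift (i + j) w.
Proof.
rewrite /Tshift /shiftZ /=; congr pair; apply: funext => n; by rewrite [i + j]addrC addrA.
Qed.

Lemma Tshift0 (w : T) : Tshift 0 w = w.
Proof.
case: w => x x'; rewrite /Tshift /shiftZ /=; congr pair; apply: funext => n;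
by rewrite addr0.
Qed.

Lemma Tshift_meas j (E : set T) : measurable E -> measurable (Tshift j @^-1` E).
Proof.
move=> mE.
have mf : measurable_fun [set: T] (Tshift j : T -> T).
  have H := (@measurability _ _ T T setT (Tshift j) (@cylinders A A' a0 b0)).
  apply: H; first reflexivity.
  move=> _ [B hB <-]; rewrite setTI.
  case: hB => [[n [a ->]]|[n [b ->]]].
  - have -> : Tshift j @^-1` [set w : T | w.1 n = a] = [set w : T | w.1 (n + j) = a].
      by apply/seteqP; split.
    exact: mcyl1.
  - have -> : Tshift j @^-1` [set w : T | w.2 n = b] = [set w : T | w.2 (n + j) = b].
      by apply/seteqP; split.
    exact: mcyl2.
by have := mf measurableT E mE; rewrite setTI.
Qed.

Lemma subshift_meas (theta : A -> seq A) :
  measurable [set w : T | subshift_of theta w.1].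
Proof.
have -> : [set w : T | subshift_of theta w.1] =
   \bigcap_(i : int) \bigcap_(len : nat)
     [set w : T | (fun s => exists (m : nat) (a : A), infix s (subst_iter theta m [:: a]))
                    (map w.1 [seq i + j%:Z | j <- iota 0 len])].
  apply/seteqP; split => w /=.
  - move=> h i _ len _ /=; rewrite -map_comp; exact: h.
  - by move=> h i len; have := h i I len I => /=; rewrite -map_comp.
apply: mI => i; apply: mI => len.
exact: (mmap1 _ (fun s => exists (m : nat) (a : A), infix s (subst_iter theta m [:: a]))).
Qed.

Lemma periodic_meas (p : nat) (y : int -> A') :
  measurable [set w : T | periodic_subshift p y w.2].
Proof.
have -> : [set w : T | periodic_subshift p y w.2] =
   \bigcup_(j : int) \bigcap_(n : int) [set w : T | w.2 n = y (n + j)].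
  apply/seteqP; split => w /=.
  - by case: w => x x' /= [j _ h]; exists j => // n _; rewrite -h.
  - by move=> [j _ h]; exists j => //; apply: funext => n; rewrite /shiftZ (h n).
by apply: mU => j; apply: mI => n; apply: mcyl2.
Qed.
End Meas.
From mathcomp Require Import zify ring lra.
Section M2.
Variables (R : realType) (A A' : finType) (a0 : A) (b0 : A').
Local Notation T := (OmegaM a0 b0).
Variable rho : probability T R.
Hypothesis inv : forall E : set T, measurable E -> rho (Tshift 1 @^-1` E) = rho E.
Hypothesis erg : forall E : set T, measurable E ->
     Tshift 1 @^-1` E = E -> rho E = 0%E \/ rho E = 1%E.

Lemma preimTD i j (E : set T) :
  Tshift i @^-1` (Tshift j @^-1` E) = Tshift (i + j) @^-1` E.
Proof. by apply/seteqP; split => w /=; rewrite TshiftD. Qed.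

Lemma rho_shift_nat (n : nat) E : measurable E -> rho (Tshift n%:Z @^-1` E) = rho E.
Proof.
move=> mE; elim: n => [|n IH].
  have -> : Tshift 0%:Z @^-1` E = E by apply/seteqP; split => w /=; rewrite Tshift0.
  by [].
rewrite -[n.+1]add1n PoszD -preimTD inv ?IH //; exact: Tshift_meas.
Qed.

Lemma rho_shift (j : int) E : measurable E -> rho (Tshift j @^-1` E) = rho E.
Proof.
move=> mE; case: j => n; first exact: rho_shift_nat.
rewrite -(rho_shift_nat n.+1 (Tshift_meas (Negz n) mE)) preimTD.
have -> : n.+1%:Z + Negz n = 0 by rewrite NegzE addrN.
have -> : Tshift 0 @^-1` E = E by apply/seteqP; split => w /=; rewrite Tshift0.
by [].
Qed.

Lemma rhoC1 (E : set T) : measurable E -> rho E = 1%E -> rho (~` E) = 0%E.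
Proof. by move=> mE h; rewrite probability_setC // h subee. Qed.

Lemma ae_from (good : T -> Prop) (S1 S2 : set T) :
  measurable S1 -> measurable S2 -> rho S1 = 1%E -> rho S2 = 1%E ->
  (forall w, S1 w -> S2 w -> good w) -> {ae rho, forall w, good w}.
Proof.
move=> m1 m2 h1 h2 hg.
exists (~` S1 `|` ~` S2); split.
- by apply: measurableU; apply: measurableC.
- apply/eqP; rewrite eq_le measure_ge0 andbT.
  have := measureU2 rho (measurableC m1) (measurableC m2).
  have e1 := rhoC1 m1 h1; have e2 := rhoC1 m2 h2.
  move=> h; apply: le_trans h _.
  change (rho (~` S1) + rho (~` S2) <= 0)%E.
  by rewrite e1 e2 adde0.

- move=> w /= hw.
  case: (pselect (S1 w)) => a1; last by left.
  case: (pselect (S2 w)) => a2; last by right.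
  by exfalso; apply: hw; apply: hg.
Qed.

Variables (B : nat -> set T) (Qs : nat -> bool) (delta : R).
Hypothesis mB : forall q, measurable (B q).
Hypothesis Qinf : forall N, exists q, (N <= q)%N /\ Qs q.
Hypothesis delta0 : 0 < delta.
Hypothesis Bdelta : forall q, Qs q -> (delta%:E <= rho (B q))%E.

Definition FN (N : nat) : set T :=
  \bigcup_(q : nat) (if (N <= q)%N && Qs q then B q else set0).
Definition Ls : set T := \bigcap_(N : nat) FN N.
Definition Gs : set T := \bigcup_(j : int) (Tshift j @^-1` Ls).

Lemma mFN N : measurable (FN N).
Proof. by apply: mU => q; case: ifP => _ //; exact: measurable0. Qed.

Lemma mLs : measurable Ls.
Proof. by apply: mI => N; exact: mFN. Qed.

Lemma mGs : measurable Gs.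
Proof. by apply: mU => j; apply: Tshift_meas; exact: mLs. Qed.

Lemma Ls_ge : (delta%:E <= rho Ls)%E.
Proof.
have hF : forall N, (delta%:E <= rho (FN N))%E.
  move=> N; have [q [hq hQ]] := Qinf N.
  apply: le_trans (Bdelta hQ) _; apply: le_measure; rewrite ?inE //; try exact: mFN.
  by move=> w hw; exists q => //; rewrite hq hQ.
have dec : {homo FN : n m / (n <= m)%N >-> (m <= n)%O}.
  move=> n m hnm; rewrite subsetEset => w [q _ hw]; exists q => //.
  by move: hw; case: ifP => // /andP [h1 h2] hw; rewrite (leq_trans hnm h1) h2.
have cv := nonincreasing_cvg_mu (mu := rho) (F := FN)
   (le_lt_trans (probability_le1 rho (mFN 0)) (ltry _)) mFN mLs dec.
rewrite -(cvg_lim _ cv) //; apply: lime_ge; first by apply/cvg_ex; eexists; exact: cv.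
by near=> n; exact: hF.
Unshelve. all: by end_near.
Qed.

Lemma Gs1 : rho Gs = 1%E.
Proof.
have inv1 : Tshift 1 @^-1` Gs = Gs.
  apply/seteqP; split => w /=.
  - by move=> [j _ h]; exists (1 + j) => //; move: h => /=; rewrite TshiftD.
  - move=> [j _ h]; exists (j - 1) => //=; rewrite TshiftD.
    by have -> : 1 + (j - 1) = j by ring.
have hpos : (delta%:E <= rho Gs)%E.
  apply: le_trans Ls_ge _; apply: le_measure; rewrite ?inE //; try exact: mLs; try exact: mGs.
  by move=> w hw; exists 0 => //=; rewrite Tshift0.
case: (erg mGs inv1) => // h; by move: hpos; rewrite h lee_fin leNgt delta0.
Qed.

Lemma Ls_inf w : Ls w -> forall N, exists q, [/\ (N <= q)%N, Qs q & B q w].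
Proof.
move=> hw N; have [q _] := hw N I; case: ifP => // /andP [h1 h2] h.
by exists q.
Qed.
End M2.
Lemma mem_bigsetU (U : Type) (F : nat -> set U) (n t : nat) (w : U) :
  (t < n)%N -> F t w -> (\big[setU/set0]_(i < n) F i) w.
Proof.
elim: n => [|n IH] // htn hw; rewrite big_ord_recr /=.
case: (ltngtP t n) => [htn'|hnt|e].
- by left; exact: IH.
- by exfalso; move: htn hnt; rewrite ltnS leqNgt => /negP.
- by right; rewrite -e.
Qed.

Section M3.
Variables (R : realType) (A A' : finType) (a0 : A) (b0 : A').
Local Notation T := (OmegaM a0 b0).
Variable rho : probability T R.
Hypothesis inv : forall E : set T, measurable E -> rho (Tshift 1 @^-1` E) = rho E.

Lemma cover_bound (S B : set T) (T0 : nat) (s : nat -> int) :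
  measurable S -> measurable B -> rho S = 1%E -> (0 < T0)%N ->
  S `<=` \big[setU/set0]_(t < T0) (Tshift (s t) @^-1` B) ->
  (((T0%:R)^-1 : R)%:E <= rho B)%E.
Proof.
move=> mS mB hS hT hcov.
have mF : forall t, measurable (Tshift (s t) @^-1` B) by move=> t; exact: Tshift_meas.
have h1 : (1 <= \sum_(t < T0) rho (Tshift (s t) @^-1` B))%E.
  have mU' : measurable (\big[setU/set0]_(t < T0) (Tshift (s t) @^-1` B)).
    by apply: bigsetU_measurable => t _; exact: mF.
  apply: le_trans (Boole_inequality rho (fun t _ => mF t)).
  rewrite -hS; apply: le_measure => //; rewrite inE //.
have hB0 : (0 <= rho B)%E by apply: measure_ge0.
have hB1 : (rho B <= 1)%E by apply: probability_le1.
have fB : rho B \is a fin_num by rewrite ge0_fin_numE // (le_lt_trans hB1) ?ltry.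
move: h1.
under eq_bigr => t _ do rewrite (rho_shift inv (s t) mB).
rewrite -(fineK fB) sumEFin lee_fin sumr_const card_ord => h.
rewrite lee_fin.
have hT' : (0 : R) < T0%:R by rewrite ltr0n.
rewrite -[X in X <= _]mulr1 ler_pdivrMl // -mulr_natl.
by rewrite mulr1 mulr_natl.
Qed.
End M3.
From mathcomp Require Import zify.
Section Comb.
Variables (A : finType) (theta : A -> seq A).
Hypothesis hsub : is_substitution theta.
Local Notation th n w := (subst_iter theta n w).
Local Open Scope nat_scope.

Lemma sw_cat s t : subst_word theta (s ++ t) = subst_word theta s ++ subst_word theta t.
Proof. by rewrite /subst_word map_cat flatten_cat. Qed.

Lemma th_cat n s t : th n (s ++ t) = th n s ++ th n t.
Proof. by elim: n => [|n IH] //=; rewrite IH sw_cat. Qed.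

Lemma th_add m n w : th (m + n) w = th m (th n w).
Proof. by rewrite /subst_iter iterD. Qed.

Lemma th_comm m n w : th m (th n w) = th n (th m w).
Proof. by rewrite -!th_add addnC. Qed.

Lemma th_infix n s t : infix s t -> infix (th n s) (th n t).
Proof.
move=> /infixP [s1 [s2 ->]]; apply/infixP; exists (th n s1), (th n s2).
by rewrite !th_cat.
Qed.

Lemma th_mem n b w : b \in w -> infix (th n [:: b]) (th n w).
Proof.
move=> /splitPr [p1 p2]; apply/infixP; exists (th n p1), (th n p2).
by rewrite -th_cat -th_cat.
Qed.

Lemma th_nil n : th n [::] = [::].
Proof. by elim: n => //= n ->. Qed.

Lemma th_blocks n z : th n z = flatten (map (fun e => th n [:: e]) z).
Proof.
elim: z => [|e z IH] /=; first exact: th_nil.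
by rewrite -IH -th_cat.
Qed.

Definition Kmax := \max_(c : A) size (theta c).

Lemma sw_cons c s : subst_word theta (c :: s) = theta c ++ subst_word theta s.
Proof. by []. Qed.

Lemma size_sw_ge s : size s <= size (subst_word theta s).
Proof.
elim: s => [|c s IH] //=; rewrite sw_cons size_cat.
have := hsub c; lia.
Qed.

Lemma size_sw_le s : size (subst_word theta s) <= Kmax * size s.
Proof.
elim: s => [|c s IH]; first by rewrite muln0.
rewrite sw_cons size_cat /= mulnS.
have : size (theta c) <= Kmax by apply: (leq_bigmax c).
lia.
Qed.

Lemma size_th_ge n w : size w <= size (th n w).
Proof. elim: n => [|n IH] //=; apply: leq_trans IH (size_sw_ge _). Qed.

Lemma size_th_le n w : size (th n w) <= Kmax ^ n * size w.
Proof.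
elim: n => [|n IH] /=; first by rewrite expn0 mul1n.
apply: leq_trans (size_sw_le _) _; rewrite expnS -mulnA leq_mul2l IH orbT //.
Qed.

Lemma size_infix (s t : seq A) : infix s t -> size s <= size t.
Proof. by move=> /infixP [s1 [s2 ->]]; rewrite !size_cat; lia. Qed.

Lemma mem_infix (b : A) s t : infix s t -> b \in s -> b \in t.
Proof. by move=> /infixP [s1 [s2 ->]] h; rewrite !mem_cat h orbT. Qed.

Hypothesis hprim : primitive theta.
Definition Np := projT1 (cid hprim).
Lemma Np_spec : forall a b : A, b \in th Np [:: a].
Proof. exact: projT2 (cid hprim). Qed.

Lemma th_nonnil n a : 0 < size (th n [:: a]).
Proof. by apply: leq_trans (size_th_ge _ _). Qed.

Lemma prim_all j : Np <= j -> forall a b : A, b \in th j [:: a].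
Proof.
move=> hj a b; have -> : j = Np + (j - Np) by lia.
rewrite th_add.
case E: (th (j - Np) [:: a]) => [|e z]; first by have := th_nonnil (j - Np) a; rewrite E.
apply: (mem_infix (s := th Np [:: e])); last exact: Np_spec.
by apply: th_mem; rewrite inE eqxx.
Qed.

Lemma growth_step w : (exists c, 1 < size (theta c)) -> 0 < size w ->
  (size w).+1 <= size (th Np.+1 w).
Proof.
move=> [c hc] hw.
have hcm : c \in th Np w.
  case: w hw => [|e z] // _.
  apply: (mem_infix (s := th Np [:: e])); last exact: Np_spec.
  by apply: th_mem; rewrite inE eqxx.
have h1 : forall v : seq A, c \in v -> (size v).+1 <= size (subst_word theta v).
  elim=> [|d v IH] //; rewrite inE sw_cons size_cat /= => /orP [/eqP hcd|hv].
  + rewrite -hcd; move: (size_sw_ge v) => h; rewrite -add2n; exact: leq_add hc h.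
  + have := IH hv; have := hsub d; lia.
have := h1 _ hcm; have := size_th_ge Np w.
have -> : th Np.+1 w = subst_word theta (th Np w) by [].
lia.
Qed.

Lemma growth : (exists c, 1 < size (theta c)) ->
  forall M, exists n1, forall n, n1 <= n -> forall a, M <= size (th n [:: a]).
Proof.
move=> hc M; exists (M * Np.+1) => n hn a.
have h : forall t, t.+1 <= size (th (t * Np.+1) [:: a]).
  elim=> [|t IH]; first by rewrite mul0n /=.
  have -> : t.+1 * Np.+1 = Np.+1 + t * Np.+1 by rewrite mulSn.
  rewrite th_add; apply: leq_trans (growth_step hc _); first by [].
  by apply: leq_trans IH.
have -> : n = (n - M * Np.+1) + M * Np.+1 by lia.
rewrite th_add; apply: leq_trans (size_th_ge _ _).
by apply: leq_trans (h M).
Qed.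

Lemma all_equal : (forall c, size (theta c) <= 1) -> forall a b : A, a = b.
Proof.
move=> h1 a b.
have s1 : size (th Np [:: a]) <= 1.
  have : Kmax <= 1 by apply/bigmax_leqP => c _; exact: h1.
  move=> hK; apply: leq_trans (size_th_le _ _) _; rewrite /= muln1.
  elim: Np => [|n IH] //; rewrite expnS.
  by rewrite -[1]muln1 leq_mul.
have ha := Np_spec a a; have hb := Np_spec a b.
case E: (th Np [:: a]) s1 ha hb => [|e [|e' z]] //= _.
by rewrite !inE => /eqP -> /eqP ->.
Qed.
End Comb.
From mathcomp Require Import zify.
Section Block.
Local Open Scope nat_scope.
Variable T : eqType.

Lemma block (ss : seq (seq T)) (L : nat) (s win s' : seq T) :
  flatten ss = s ++ win ++ s' -> (forall b, b \in ss -> size b <= L) ->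
  2 * L < size win -> exists2 b, b \in ss & infix b win.
Proof.
elim: ss s => [|b ss IH] s /= E hL hw.
  by have := congr1 size E; rewrite !size_cat /=; lia.
have hb : size b <= L by apply: hL; rewrite inE eqxx.
have hL' : forall b', b' \in ss -> size b' <= L.
  by move=> b' h; apply: hL; rewrite inE h orbT.
case: (ltngtP (size b) (size s)) => hbs.
- have E2 := congr1 (drop (size b)) E.
  rewrite (drop_size_cat _ (erefl (size b))) drop_cat hbs in E2.
  have [b' h1 h2] := IH _ E2 hL' hw.
  by exists b' => //; rewrite inE h1 orbT.
- have E2 := congr1 (drop (size s)) E.
  rewrite (drop_size_cat _ (erefl (size s))) drop_cat hbs in E2.
  set d := drop (size s) b in E2.
  have hd : size d <= L by rewrite size_drop; lia.
  have E3 := congr1 (drop (size d)) E2.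
  rewrite (drop_size_cat _ (erefl (size d))) drop_cat ifT in E3; last first.
    have := congr1 size E2; rewrite !size_cat; lia.
  set win2 := drop (size d) win in E3.
  have hw2 : L < size win2 by rewrite size_drop; lia.
  clear E E2 hL; case: ss IH hL' E3 => [|b' ss''] IH hL' /= E3.
    by have := congr1 size E3; rewrite size_cat /=; lia.
  have hb' : size b' <= L by apply: hL'; rewrite inE eqxx.
  have E4 := congr1 (take (size b')) E3.
  rewrite (take_size_cat _ (erefl (size b'))) take_cat ifT in E4; last by lia.
  exists b'; first by rewrite !inE eqxx orbT.
  apply/infixP; exists (take (size d) win), (drop (size b') win2).
  have -> : b' ++ drop (size b') win2 = win2 by rewrite {1}E4 cat_take_drop.
  by rewrite /win2 cat_take_drop.
- have E2 := congr1 (drop (size b)) E.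
  rewrite (drop_size_cat _ (erefl (size b))) hbs (drop_size_cat _ (erefl (size s))) in E2.
  have [b' h1 h2] := IH [::] E2 hL' hw.
  by exists b' => //; rewrite inE h1 orbT.
Qed.
End Block.
Section Comb2.
Variables (A : finType) (theta : A -> seq A).
Hypothesis hsub : is_substitution theta.
Hypothesis hprim : primitive theta.
Local Notation th n w := (subst_iter theta n w).
Local Notation X := (subshift_of theta).
Local Open Scope nat_scope.

Lemma lang_infix v : language X v -> exists m b, infix v (th m [:: b]).
Proof. by move=> [x hx [i hi]]; rewrite hi; exact: hx. Qed.

Lemma wfactor_take (x : int -> A) i len l : take l (wfactor x i len) = wfactor x i (minn l len).
Proof. by rewrite /wfactor -map_take take_iota. Qed.

Lemma lang_take v l : language X v -> language X (take l v).
Proof.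
move=> [x hx [i hi]]; exists x => //; exists i.
by rewrite {1}hi wfactor_take size_take_min.
Qed.

Definition Lmax J := \max_(e : A) size (th J [:: e]).

Lemma occurrence v : language X v -> exists m : nat, forall n x, X x ->
  exists s s', wfactor x 0 (2 * Lmax (n + (m + Np hprim)) + 1) = s ++ th n v ++ s'.
Proof.
move=> /lang_infix [m [b hvb]]; exists m => n x hx.
set J := n + (m + Np hprim); set W := 2 * Lmax J + 1.
have [m0 [a0' hwin]] := hx 0%R W.
set z := th (m0 + Np hprim) [:: a0'].
have h1 : infix (wfactor x 0 W) (th J z).
  apply: (infix_trans hwin).
  have -> : th J z = th m0 (th (J + Np hprim) [:: a0']).
    by rewrite /z -!th_add; congr subst_iter; lia.
  apply: th_mem; apply: prim_all => //; lia.
move: h1; rewrite th_blocks => /infixP [s1 [s2 E]].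
have hb1 : forall bl, bl \in [seq th J [:: e0] | e0 <- z] -> size bl <= Lmax J.
  move=> bl /mapP [e _ ->]; exact: (leq_bigmax e).
have hb2 : 2 * Lmax J < size (wfactor x 0 W).
  by rewrite /wfactor size_map size_iota /W; lia.
have [bl hbl hinf] := block E hb1 hb2.
move: hbl hinf => /mapP [e _ ->] hinf.
have h2 : infix (th n v) (th J [:: e]).
  rewrite /J !th_add; apply: th_infix; apply: (infix_trans hvb).
  by apply: th_mem; exact: Np_spec.
by apply/infixP; apply: infix_trans h2 hinf.
Qed.

Lemma Lmax_bound m n a : Lmax (n + (m + Np hprim)) <=
   Kmax theta ^ (m + Np hprim) * (Kmax theta ^ Np hprim * size (th n [:: a])).
Proof.
apply/bigmax_leqP => e _.
rewrite addnC th_add; apply: leq_trans (size_th_le _ _ _) _.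
rewrite leq_mul2l; apply/orP; right.
have h : infix (th n [:: e]) (th n (th (Np hprim) [:: a])) by apply: th_mem; exact: Np_spec.
apply: leq_trans (size_infix h) _.
by rewrite th_comm; exact: size_th_le.
Qed.

Lemma take_addn_cat (s t : seq A) n : take (size s + n) (s ++ t) = s ++ take n t.
Proof. by rewrite take_cat ltnNge leq_addr /= addKn. Qed.

Lemma per_struct n (a : A) u' (d : A) :
  let U := th n (a :: u') in
  let w := th n ((a :: u') ++ (a :: u') ++ (a :: u') ++ [:: a]) in
  size w = 3 * size U + size (th n [:: a]) /\
  forall i, i + size U < size w -> nth d w i = nth d w (i + size U).
Proof.
move=> U w.
have hU : U = th n [:: a] ++ th n u' by rewrite /U -th_cat.
have hw : w = U ++ U ++ U ++ th n [:: a] by rewrite /w !th_cat.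
split; first by rewrite hw !size_cat; lia.
move=> i hi.
set w'' := U ++ U ++ th n [:: a].
have e1 : w = w'' ++ (th n u' ++ th n [:: a]).
  by rewrite hw {3}hU /w'' !catA.
have e2 : w = U ++ w'' by rewrite hw.
have hs : i < size w'' by move: hi; rewrite hw /w'' !size_cat; lia.
rewrite {1}e1 nth_cat hs e2 nth_cat ltnNge leq_addl /= addnK.
by [].
Qed.
End Comb2.
From mathcomp Require Import lra.
Section Idx.
Variables (R : realType) (A : finType).

Lemma index_extract (X : set (int -> A)) (u : seq A) :
  (3%:E < index_word R X u)%E ->
  (0 < size u)%N /\ exists M0, language X (wpow u M0) /\ (3 * size u < M0)%N.
Proof.
move=> /ereal_sup_gt [_ [M0 hM0 <-]]; rewrite lte_fin => h.
have hu : (0 < size u)%N.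
  case: (size u) h => // h; exfalso; move: h.
  rewrite (_ : (0%:R : R) = 0) // invr0 mulr0; lra.
split => //; exists M0; split => //.
have hu' : (0 : R) < (size u)%:R by rewrite ltr0n.
move: h; rewrite ltr_pdivlMr // -natrM ltr_nat.
by rewrite mulnC.
Qed.
End Idx.
Section Comb3.
Variables (A : finType) (theta : A -> seq A).
Local Notation X := (subshift_of theta).
Local Open Scope nat_scope.

Lemma v_lang (u : seq A) (M0 : nat) a u' : language X (wpow u M0) ->
  3 * size u < M0 -> u = a :: u' -> language X (u ++ u ++ u ++ [:: a]).
Proof.
move=> hl hM hu.
have -> : u ++ u ++ u ++ [:: a] = take (size u + (size u + (size u + 1))) (wpow u M0).
  rewrite /wpow take_takel; last by lia.
  have -> : M0 = 4 + (M0 - 4) by rewrite hu /= in hM; lia.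
  rewrite /= !catA -!catA !take_addn_cat hu /=.
  by rewrite take0.
exact: lang_take.
Qed.

Lemma wfactor_nth (x : int -> A) W (s w s' : seq A) d :
  wfactor x 0 W = s ++ w ++ s' -> forall i, i < size w -> x (size s + i)%:Z = nth d w i.
Proof.
move=> E i hi.
have hW : size s + i < W.
  have := congr1 size E; rewrite /wfactor size_map size_iota !size_cat; lia.
have := congr1 (fun l => nth d l (size s + i)) E; rewrite /= nth_cat ltnNge leq_addr /= addKn.
rewrite nth_cat hi /wfactor (nth_map 0) ?size_iota // nth_iota //.
Qed.

Lemma sub_shift j x : X x -> X (shiftZ j x).
Proof.
move=> hx i len; have [m [a h]] := hx (i + j)%R len; exists m, a.
have -> : wfactor (shiftZ j x) i len = wfactor x (i + j)%R len.
  by apply: eq_map => t; rewrite /shiftZ; congr x; rewrite -!addrA [(_ + j)%R]addrC.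
exact: h.
Qed.
End Comb3.

Section Per.
Variables (A' : finType) (p : nat) (y : int -> A').

Lemma per_shift j x' : periodic_subshift p y x' -> periodic_subshift p y (shiftZ j x').
Proof.
move=> [j' _ <-]; exists (j + j')%R => //; apply: funext => n.
by rewrite /shiftZ addrA.
Qed.

Lemma per_q x' (q : nat) : is_periodic p y -> periodic_subshift p y x' ->
  (p %| q)%N -> forall t, x' (t + q%:Z)%R = x' t.
Proof.
move=> [p0 hy] [j' _ <-] /dvdnP [r ->] t; rewrite /shiftZ.
have hyr : forall r n, y (n + (r * p)%:Z)%R = y n.
  elim=> [|r' IH] n; first by rewrite mul0n addr0.
  by rewrite mulSn PoszD addrA addrAC hy IH.
by rewrite addrAC hyr.
Qed.
End Per.
Section Final.
Variables (R : realType) (A A' : finType) (a0 : A) (b0 : A').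
Local Notation T := (OmegaM a0 b0).

Definition Bq (n0 : int) (k q : nat) : set T :=
  [set w : T | forall i : nat, (i < 2 * q + k)%N ->
     w.1 (n0 - q%:Z + i%:Z) = w.1 (n0 - q%:Z + i%:Z + q%:Z)].

Lemma mBq n0 k q : measurable (Bq n0 k q).
Proof. by apply: mforall => i; exact: meq1. Qed.

Variables (theta : A -> seq A) (p : nat) (y : int -> A') (f : T -> R).
Hypothesis hper : is_periodic p y.

Lemma no_eig_of (n0 : int) (k : nat) (g : seq A -> (int -> A') -> R)
  (hf : forall (x : int -> A) (x' : int -> A'),
       subshift_of theta x -> periodic_subshift p y x' ->
       f (x, x') = g (wfactor x n0 k) x')
  (w : T) (j : int) :
  subshift_of theta w.1 -> periodic_subshift p y w.2 ->
  (forall N, exists q, (N <= q)%N /\ (p %| q)%N /\ Bq n0 k q (Tshift j w)) ->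
  has_no_eigenvalues (fun t => f (Tshift t w)).
Proof.
move=> hx hx' hinf; apply: (@gordon R _ j) => N.
have [q [hq [hpq hB]]] := hinf N; exists q; split => // m hm.
set w' := Tshift j w.
have e1 : Tshift (j + m) w = Tshift m w' by rewrite /w' TshiftD.
have e2 : Tshift (j + m + q%:Z) w = Tshift (m + q%:Z) w' by rewrite /w' TshiftD addrA.
rewrite e1 e2.
have hx1 : subshift_of theta w'.1 by exact: sub_shift.
have hx2 : periodic_subshift p y w'.2 by exact: per_shift.
rewrite /Tshift !hf; try (apply: sub_shift || apply: per_shift); try done.
congr g.
- rewrite /wfactor; apply/eq_in_map => i; rewrite mem_iota => /andP [_ hi]; rewrite /shiftZ.
  have ht : exists t : nat, t%:Z = m + q%:Z by exists (absz (m + q%:Z)); lia.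
  have [t ht'] := ht.
  have E1 : n0 + i%:Z + m = n0 - q%:Z + (t + i)%:Z by lia.
  have E2 : n0 + i%:Z + (m + q%:Z) = n0 - q%:Z + (t + i)%:Z + q%:Z by lia.
  rewrite E1 E2; apply: hB; lia.
- apply: funext => t; rewrite /shiftZ addrA.
  by rewrite (per_q (x' := w'.2) hper hx2 hpq).
Qed.
End Final.
Section Key.
Variables (R : realType) (A A' : finType) (a0 : A) (b0 : A').
Local Notation T := (OmegaM a0 b0).
Variables (theta : A -> seq A) (p : nat) (y : int -> A').
Variable rho : probability T R.
Hypothesis hsub : is_substitution theta.
Hypothesis hprim : primitive theta.
Hypothesis hper : is_periodic p y.
Hypothesis inv : forall E : set T, measurable E -> rho (Tshift 1 @^-1` E) = rho E.
Let XX : set T := [set w : T | subshift_of theta w.1 /\ periodic_subshift p y w.2].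
Hypothesis mXX : measurable XX.
Hypothesis hXX : rho XX = 1%E.
Local Notation th n w := (subst_iter theta n w).

Lemma key_claim (n0 : int) (k : nat) (u : seq A) :
  (3%:E < index_word R (subshift_of theta) u)%E ->
  (forall N : nat, exists n : nat, (N <= n)%N /\ (p %| size (th n u))%N) ->
  exists delta : R, 0 < delta /\ forall N, exists q : nat,
    [/\ (N <= q)%N, (0 < q)%N, (p %| q)%N & (delta%:E <= rho (@Bq A A' a0 b0 n0 k q))%E].
Proof.
move=> hind hdiv.
have p0 : (0 < p)%N by case: hper.
case: (pselect (exists c, 1 < size (theta c))%N) => hc; last first.
  have h1 : forall c, (size (theta c) <= 1)%N.
    by move=> c; rewrite leqNgt; apply/negP => h; apply: hc; exists c.
  have heq := all_equal hprim h1.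
  exists 1; split => // N; exists (p * N.+1); split.
  - exact: leq_trans (leqnSn N) (leq_pmull _ p0).
  - by rewrite muln_gt0 p0.
  - exact: dvdn_mulr.
  - have -> : @Bq A A' a0 b0 n0 k (p * N.+1) = setT.
      by apply/seteqP; split => // w _ i _; apply: heq.
    by rewrite probability_setT.
have [hu [M0 [hlM hM]]] := index_extract hind.
case Eu: u hu hdiv hlM hM => [|a u'] // _ hdiv hlM hM.
have hv := v_lang hlM hM (erefl (a :: u')).
have [m hocc] := occurrence hsub hprim hv.
set C := (Kmax theta ^ (m + Np hprim) * Kmax theta ^ Np hprim)%N.
set T0 := (4 * C + 3)%N.
exists (T0%:R^-1); split; first by rewrite invr_gt0 ltr0n /T0 addnS.
move=> N.
have [n1 hn1] := growth hsub hprim hc (N + 2 * k + 2).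
have [n [hn hpn]] := hdiv n1.
set q := size (th n (a :: u')).
set l := size (th n [:: a]).
have hl : (N + 2 * k + 2 <= l)%N := hn1 n hn a.
have hql : (l <= q)%N.
  have -> : q = size (th n [:: a] ++ th n u') by rewrite -th_cat.
  by rewrite size_cat leq_addr.
exists q; split => //; try lia.
set h := (l - k)%N.
apply: (cover_bound inv (S := XX) (s := fun t => q%:Z - n0 + (t * h)%N%:Z)) => //;
  [exact: mBq | by rewrite /T0; lia |].
move=> w [hx hx'].
have [s1 [s2 Eo]] := hocc n w.1 hx.
set vv := (a :: u') ++ (a :: u') ++ (a :: u') ++ [:: a] in Eo.
have [hsz hperw] := per_struct theta n a u' a.
rewrite -/vv -/q -/l in hsz hperw.
set P := size s1.
set W := (2 * Lmax theta (n + (m + Np hprim)) + 1)%N in Eo.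
have hPW : (P + size (th n vv) <= W)%N.
  have := congr1 size Eo; rewrite /wfactor size_map size_iota !size_cat; lia.
have hLm := Lmax_bound hprim m n a; rewrite -/l mulnA -/C in hLm.
have h0 : (0 < h)%N by rewrite /h; lia.
have hCl : (C * l <= 2 * (C * h))%N.
  rewrite mulnCA leq_mul2l; apply/orP; right; rewrite /h; lia.
have hPh : (P < (4 * C + 2) * h)%N.
  rewrite mulnDl -mulnA; lia.
set t := (P %/ h + 1)%N.
have ht : (t < T0)%N.
  have : (P %/ h < 4 * C + 2)%N by rewrite ltn_divLR.
  rewrite /t /T0; lia.
have hth1 : (P < t * h)%N by rewrite /t addn1 ltn_ceil.
have hth2 : (t * h <= P + h)%N.
  by rewrite /t mulnDl mul1n leq_add2r leq_trunc_div.
apply: (@mem_bigsetU T (fun t0 : nat => Tshift (q%:Z - n0 + (t0 * h)%N%:Z) @^-1` (@Bq A A' a0 b0 n0 k q)) T0 t w ht).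
move=> i hi; rewrite /Tshift /shiftZ /=.
set jj := (i + (t * h - P))%N.
have hjj : (jj + q < size (th n vv))%N by rewrite hsz /jj; lia.
have E1 : n0 - q%:Z + i%:Z + (q%:Z - n0 + (t * h)%N%:Z) = (P + jj)%N%:Z.
  by rewrite /jj; lia.
have E2 : n0 - q%:Z + i%:Z + q%:Z + (q%:Z - n0 + (t * h)%N%:Z) = (P + (jj + q))%N%:Z.
  by rewrite /jj; lia.
rewrite E1 E2 (wfactor_nth a Eo); last by lia.
rewrite (wfactor_nth a Eo) //.
by apply: hperw; lia.
Qed.
End Key.

Unset Implicit Arguments.
Theorem proposition3p41 (R : realType) (A A' : finType) (a0 : A) (b0 : A')
  (theta : A -> seq A) (p : nat) (y : int -> A')
  (rho : probability (OmegaM a0 b0) R) (f : OmegaM a0 b0 -> R) :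
  is_substitution theta ->
  primitive theta ->
  is_periodic p y ->
  rho ((subshift_of theta `*` periodic_subshift p y) : set (OmegaM a0 b0)) = 1%E ->
  (forall E : set (OmegaM a0 b0), measurable E ->
     rho (Tshift 1 @^-1` E) = rho E) ->
  (forall E : set (OmegaM a0 b0), measurable E ->
     Tshift 1 @^-1` E = E -> rho E = 0%E \/ rho E = 1%E) ->
  (exists (n : int) (k : nat) (g : seq A -> (int -> A') -> R),
     forall (x : int -> A) (x' : int -> A'),
       subshift_of theta x -> periodic_subshift p y x' ->
       f (x, x') = g (wfactor x n k) x') ->
  (exists u : seq A,
     [/\ language (subshift_of theta) u,
         (3%:E < index_word R (subshift_of theta) u)%E &
         forall N : nat, exists n : nat,
           (N <= n)%N /\ (p %| size (subst_iter theta n u))%N]) ->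
  {ae rho, forall w : OmegaM a0 b0, has_no_eigenvalues (fun j : int => f (Tshift j w))}.
Proof.
move=> hsub hprim hper hXX inv erg [n0 [k [g hf]]] [u [hul hind hdiv]].
pose XX : set (OmegaM a0 b0) :=
  [set w | subshift_of theta w.1 /\ periodic_subshift p y w.2].
have mXX : measurable XX.
  by apply: measurableI; [exact: subshift_meas | exact: periodic_meas].
have hXX' : rho XX = 1%E by exact: hXX.
have [delta [d0 hq]] := key_claim hsub hprim hper inv mXX hXX' n0 k hind hdiv.
pose Qs := fun q : nat =>
  [&& (0 < q)%N, (p %| q)%N & (delta%:E <= rho (@Bq A A' a0 b0 n0 k q))%E].
have Qinf : forall N, exists q, (N <= q)%N /\ Qs q.
  move=> N; have [q [h1 h2 h3 h4]] := hq N; exists q; split => //.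
  by rewrite /Qs h2 h3 h4.
have Bdelta : forall q, Qs q -> (delta%:E <= rho (@Bq A A' a0 b0 n0 k q))%E.
  by move=> q /and3P [].
have hG := Gs1 erg (mBq n0 k) Qinf d0 Bdelta.
apply: (ae_from (mGs Qs (mBq n0 k)) mXX hG hXX') => w [j _ hj] [hx hx'].
apply: (no_eig_of hper hf hx hx' (j := j)) => N.
have [q [h1 h2 h3]] := Ls_inf hj N; exists q; split => //; split => //.
by case/and3P: h2.
Qed.
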